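(* For every density matrix $\sigma''$ on $\mathcal{H}$ with largest eigenvalue $\alpha$, $$d(\sigma'')\ge \alpha^{-1}\big(1+R_g(\sigma'')\big).$$
   Context: $\mathcal{H}=\mathcal{H}_1\otimes\cdots\otimes\mathcal{H}_m$ is finite-dimensional. A positive semidefinite operator is separable if it is a nonnegative combination of tensor products of positive semidefinite operators on the $\mathcal{H}_k$; $\mathfrak{S}$ is the set of separable density matrices. For a density matrix $\sigma$, $d(\sigma):=\min \mathrm{Tr}(\Pi)/\mathrm{Tr}(\sigma\Pi)$ over separable positive semidefinite operators $\Pi$ with $\mathrm{Tr}(\sigma\Pi)>0$ and $0\le \Pi/\mathrm{Tr}(\sigma\Pi)\le I$. Global robustness: $R_g(\sigma)=\min\{t\ge0:\exists$ a density matrix $\varrho$ with $(\sigma+t\varrho)/(1+t)\in\mathfrak{S}\}$. *)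

(* Defs.v *)
(* Operators on a finite-dimensional Hilbert space with an
   orthonormal basis indexed by a finType T are represented by their matrices
   T -> T -> C, over an arbitrary numClosedFieldType C (e.g. the complex numbers). *)
From HB Require Import structures.
From mathcomp Require Import all_boot all_order all_algebra.
Set Implicit Arguments. Unset Strict Implicit. Unset Printing Implicit Defensive.
Import Order.TTheory GRing.Theory Num.Theory.
Local Open Scope ring_scope.

Section Ops.
Variable C : numClosedFieldType.

Definition op (T : finType) := T -> T -> C.

Definition tr (T : finType) (A : op T) : C := \sum_(i : T) A i i.

Definition opmul (T : finType) (A B : op T) : op T :=
  fun i j => \sum_(k : T) A i k * B k j.

Definition opscale (T : finType) (a : C) (A : op T) : op T := fun i j => a * A i j.

Definition opid (T : finType) : op T := fun i j => if i == j then 1 else 0.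

Definition opsub (T : finType) (A B : op T) : op T := fun i j => A i j - B i j.

(* positive semidefinite: <v, A v> >= 0 for every vector v
   (in a numClosedFieldType, 0 <= z means z is real and nonnegative) *)
Definition psd (T : finType) (A : op T) : Prop :=
  forall v : T -> C, 0 <= \sum_(i : T) \sum_(j : T) (v i)^* * A i j * v j.

Definition loewner_le (T : finType) (A B : op T) : Prop := psd (opsub B A).

Definition density (T : finType) (A : op T) : Prop := psd A /\ tr A = 1.

Definition eigenvalue (T : finType) (A : op T) (l : C) : Prop :=
  exists v : T -> C, (exists i, v i != 0) /\
    forall i, \sum_(j : T) A i j * v j = l * v i.

Definition largest_eigenvalue (T : finType) (A : op T) (a : C) : Prop :=
  eigenvalue A a /\ forall l, eigenvalue A l -> l <= a.

(* Multipartite space H = H_1 (x) ... (x) H_m with dim H_k = d k;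
   basis indexed by tuples (x_k)_k with x_k : 'I_(d k). *)
Definition msys (m : nat) (d : 'I_m -> nat) : finType :=
  {dffun forall k : 'I_m, 'I_(d k)}.

Definition tensor (m : nat) (d : 'I_m -> nat) (P : forall k : 'I_m, op 'I_(d k))
  : op (msys d) :=
  fun x y => \prod_(k < m) P k (x k) (y k).

Definition separable (m : nat) (d : 'I_m -> nat) (Pi : op (msys d)) : Prop :=
  exists (n : nat) (c : 'I_n -> C) (P : 'I_n -> forall k : 'I_m, op 'I_(d k)),
    (forall i, 0 <= c i) /\ (forall i k, psd (P i k)) /\
    forall x y, Pi x y = \sum_(i < n) c i * tensor (P i) x y.

Definition sep_state (m : nat) (d : 'I_m -> nat) (rho : op (msys d)) : Prop :=
  density rho /\ separable rho.

Definition d_feasible (m : nat) (d : 'I_m -> nat) (sigma Pi : op (msys d)) : Prop :=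
  separable Pi /\ psd Pi /\ 0 < tr (opmul sigma Pi) /\
  psd (opscale (tr (opmul sigma Pi))^-1 Pi) /\
  loewner_le (opscale (tr (opmul sigma Pi))^-1 Pi) (@opid (msys d)).

Definition Rg_feasible (m : nat) (d : 'I_m -> nat) (sigma : op (msys d)) (t : C) : Prop :=
  0 <= t /\ exists rho : op (msys d), density rho /\
    sep_state (fun x y => (sigma x y + t * rho x y) / (1 + t)).

Definition is_global_robustness (m : nat) (d : 'I_m -> nat) (sigma : op (msys d)) (r : C) : Prop :=
  Rg_feasible sigma r /\ forall t, Rg_feasible sigma t -> r <= t.

End Ops.

(* Main.v *)
Require Import Defs.
From HB Require Import structures.
From mathcomp Require Import all_boot all_order all_algebra.
From mathcomp Require Import ring.
Import Order.TTheory GRing.Theory Num.Theory.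
Local Open Scope ring_scope.
Local Open Scope sesquilinear_scope.

Section Q.
Variable C : numClosedFieldType.
Variable T : finType.

Definition Qb (A : op C T) (x y : T -> C) : C :=
  \sum_i \sum_j (x i)^* * A i j * y j.

Definition vadd (x y : T -> C) := fun i => x i + y i.
Definition vsc (c : C) (x : T -> C) := fun i => c * x i.
Definition ev (i : T) : T -> C := fun k => (i == k)%:R.

Lemma QbDl A x y z : Qb A (vadd x y) z = Qb A x z + Qb A y z.
Proof.
rewrite /Qb -big_split /=; apply: eq_bigr => i _.
rewrite -big_split /=; apply: eq_bigr => j _; rewrite /vadd rmorphD /=; ring.
Qed.

Lemma QbDr A x y z : Qb A x (vadd y z) = Qb A x y + Qb A x z.
Proof.
rewrite /Qb -big_split /=; apply: eq_bigr => i _.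
rewrite -big_split /=; apply: eq_bigr => j _; rewrite /vadd; ring.
Qed.

Lemma QbZl A c x y : Qb A (vsc c x) y = c^* * Qb A x y.
Proof.
rewrite /Qb mulr_sumr; apply: eq_bigr => i _.
rewrite mulr_sumr; apply: eq_bigr => j _; rewrite /vsc rmorphM /=; ring.
Qed.

Lemma QbZr A c x y : Qb A x (vsc c y) = c * Qb A x y.
Proof.
rewrite /Qb mulr_sumr; apply: eq_bigr => i _.
rewrite mulr_sumr; apply: eq_bigr => j _; rewrite /vsc; ring.
Qed.

Lemma Qb_sub A B x y : Qb (opsub A B) x y = Qb A x y - Qb B x y.
Proof.
rewrite /Qb -sumrB; apply: eq_bigr => i _.
rewrite -sumrB; apply: eq_bigr => j _; rewrite /opsub; ring.
Qed.

Lemma Qb_scale A c x y : Qb (opscale c A) x y = c * Qb A x y.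
Proof.
rewrite /Qb mulr_sumr; apply: eq_bigr => i _.
rewrite mulr_sumr; apply: eq_bigr => j _; rewrite /opscale; ring.
Qed.

Lemma Qb_id x y : Qb (@opid C T) x y = \sum_i (x i)^* * y i.
Proof.
rewrite /Qb /opid; apply: eq_bigr => i _.
rewrite (bigD1 i) //= big1 ?addr0 ?eqxx ?mulr1 // => j.
by rewrite eq_sym => /negbTE ->; rewrite mulr0 mul0r.
Qed.

Lemma Qb_ev A i j : Qb A (ev i) (ev j) = A i j.
Proof.
rewrite /Qb (bigD1 i) //= [X in _ + X]big1 ?addr0; last first.
  move=> k hk; rewrite /ev eq_sym (negbTE hk) rmorph0 /=.
  by rewrite big1 // => l _; rewrite !mul0r.
rewrite (bigD1 j) //= [X in _ + X]big1 ?addr0 /ev ?eqxx ?rmorph1 ?mul1r ?mulr1 //.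
by move=> k hk; rewrite eq_sym (negbTE hk) mulr0.
Qed.

Lemma psd_real A v : psd A -> (Qb A v v)^* = Qb A v v.
Proof. by move=> /(_ v) h; apply: geC0_conj. Qed.

Lemma psd_herm A x y : psd A -> Qb A y x = (Qb A x y)^*.
Proof.
move=> hA.
have h1 := psd_real A (vadd x y) hA.
have h2 := psd_real A (vadd x (vsc 'i y)) hA.
have hx := psd_real A x hA. have hy := psd_real A y hA.
set a := Qb A x y; set b := Qb A y x.
have ii : 'i * 'i = -1 :> C by rewrite -expr2 sqrCi.
have E1 : Qb A (vadd x y) (vadd x y) = Qb A x x + Qb A y y + (a + b).
  by rewrite QbDl !QbDr; rewrite -/a -/b; ring.
have E2 : Qb A (vadd x (vsc 'i y)) (vadd x (vsc 'i y))
     = Qb A x x + Qb A y y + ('i * a - 'i * b).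
  rewrite QbDl !QbDr !QbZl !QbZr -/a -/b conjCi.
  have -> : - 'i * ('i * Qb A y y) = Qb A y y.
    by rewrite mulrA mulNr ii opprK mul1r.
  ring.
have hxy : (Qb A x x + Qb A y y)^* = Qb A x x + Qb A y y by rewrite rmorphD /= hx hy.
have cancel_real : forall u w : C, u^* = u -> (u + w)^* = u + w -> w^* = w.
  by move=> u w hu; rewrite rmorphD /= hu => /addrI.
have e1 := cancel_real _ _ hxy (etrans (congr1 _ (esym E1)) (etrans h1 E1)).
have e2 := cancel_real _ _ hxy (etrans (congr1 _ (esym E2)) (etrans h2 E2)).
rewrite rmorphD /= in e1.
rewrite rmorphB !rmorphM /= conjCi in e2.
have e3 : b^* - a^* = a - b.
  apply: (mulfI (neq0Ci C)). rewrite [RHS]mulrBr -e2; ring.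
have e4 : b^* *+ 2 = a *+ 2.
  have -> : b^* *+ 2 = (a^* + b^*) + (b^* - a^*) by ring.
  rewrite e1 e3; ring.
have : b^* = a.
  apply/eqP; rewrite -(eqr_pMn2r (isT : (0 < 2)%N)). by rewrite e4.
by move=> <-; rewrite conjCK.
Qed.

Lemma psd_kernel A x y : psd A -> Qb A x x = 0 -> Qb A x y = 0.
Proof.
move=> hA hx.
set c := Qb A x y; set q := Qb A y y.
have hq : 0 <= q by apply: hA.
have hyx : Qb A y x = c^* by rewrite (psd_herm _ _ _ hA).
have hq1 : (q + 1)^* = q + 1 by rewrite rmorphD /= (geC0_conj hq) rmorph1.
have := hA (vadd (vsc (q + 1) x) (vsc (- c^*) y)).
rewrite /psd -/(Qb _ _ _) !QbDl !QbDr !QbZl !QbZr hx hyx -/c -/q hq1 rmorphN /= conjCK.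
have -> : (q + 1) * ((q + 1) * 0) + (q + 1) * (- c^* * c) +
   (- c * ((q + 1) * c^*) + - c * (- c^* * q)) = - ((c * c^*) * (q + 2)) by ring.
rewrite oppr_ge0 => hle.
have hge : 0 <= (c * c^*) * (q + 2).
  by rewrite mulr_ge0 ?mul_conjC_ge0 // addr_ge0.
have : (c * c^*) * (q + 2) == 0 by rewrite eq_le hle hge.
rewrite mulf_eq0 mul_conjC_eq0 => /orP[/eqP //|].
have : 0 < q + 2 by rewrite ltr_wpDl.
by move=> /lt0r_neq0 /negbTE ->.
Qed.

Lemma psd_kernel_l A x y : psd A -> Qb A x x = 0 -> Qb A y x = 0.
Proof. by move=> hA hx; rewrite (psd_herm _ _ _ hA) (psd_kernel _ _ y hA hx) rmorph0. Qed.
Lemma sum_rank (F : 'I_#|T| -> C) : \sum_(t : T) F (enum_rank t) = \sum_(i < #|T|) F i.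
Proof.
rewrite [LHS](reindex (@enum_val T T)) /=; last by apply: onW_bij; exact: enum_val_bij.
by apply: eq_bigr => i _; rewrite enum_valK.
Qed.

Lemma spectral_basis (A : op C T) : psd A ->
  exists (u : 'I_#|T| -> T -> C) (p : 'I_#|T| -> C),
  (forall k l, \sum_t (u k t)^* * u l t = (k == l)%:R) /\
  (forall s t, \sum_k u k s * (u k t)^* = (s == t)%:R) /\
  (forall k s, \sum_t A s t * u k t = p k * u k s).
Proof.
move=> hA.
pose M : 'M[C]_#|T| := \matrix_(i, j) A (enum_val i) (enum_val j).
have Mh : M ^t* = M.
  apply/matrixP => i j; rewrite !mxE.
  by rewrite -!Qb_ev (psd_herm _ _ _ hA) conjCK.
have Mn : M \is normalmx by apply/normalmxP; rewrite Mh.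
move/orthomx_spectralP: Mn.
set P := spectralmx M; set sp := spectral_diag M => HM.
have PU : P \is unitarymx by apply: spectral_unitarymx.
have h1 : P *m P^t* = 1%:M by apply/unitarymxP.
have h2 : P^t* *m P = 1%:M.
  have := PU; rewrite -trmxC_unitary => /unitarymxP; by rewrite trmxCK.
have h3 : M *m P^t* = P^t* *m diag_mx sp.
  by rewrite [in LHS]HM mulmxtVK // invmx_unitary.
exists (fun k t => (P k (enum_rank t))^*), (fun k => sp 0 k).
split; [|split].
- move=> k l.
  move/matrixP: h1 => /(_ k l); rewrite !mxE => <-.
  rewrite -(sum_rank (fun j => P k j * (P^t* j l))).
  by apply: eq_bigr => t _; rewrite conjCK !mxE.
- move=> s t.
  move/matrixP: h2 => /(_ (enum_rank s) (enum_rank t)).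
  rewrite !mxE (inj_eq enum_rank_inj) => <-.
  by apply: eq_bigr => k _; rewrite conjCK !mxE.
- move=> k s.
  move/matrixP: h3 => /(_ (enum_rank s) k).
  rewrite mul_mx_diag !mxE => h; rewrite mulrC -h.
  rewrite -(sum_rank (fun j => M (enum_rank s) j * (P^t*) j k)) /=.
  by apply: eq_bigr => t _; rewrite !mxE !enum_rankK.
Qed.

Lemma Qb_ext X x x' y y' : x =1 x' -> y =1 y' -> Qb X x y = Qb X x' y'.
Proof.
move=> hx hy; rewrite /Qb; apply: eq_bigr => i _; apply: eq_bigr => j _.
by rewrite hx hy.
Qed.

Lemma sum_delta (K : finType) (F : K -> C) k : \sum_l F l * (k == l)%:R = F k.
Proof.
rewrite (bigD1 k) //= eqxx mulr1 big1 ?addr0 // => l hl.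
by rewrite eq_sym (negbTE hl) mulr0.
Qed.

Lemma Qb_lin (K : finType) (u : K -> T -> C) X (a b : K -> C) :
  Qb X (fun t => \sum_k a k * u k t) (fun t => \sum_l b l * u l t) =
  \sum_k \sum_l (a k)^* * b l * Qb X (u k) (u l).
Proof.
rewrite /Qb.
have e : forall i j, ((\sum_k a k * u k i)^* * X i j * \sum_l b l * u l j) =
   \sum_k \sum_l (a k)^* * b l * ((u k i)^* * X i j * u l j).
  move=> i j; rewrite rmorph_sum /= big_distrl /= big_distrl /=.
  apply: eq_bigr => k _; rewrite big_distrr /=; apply: eq_bigr => l _.
  rewrite rmorphM /=; ring.
under eq_bigr do under eq_bigr do rewrite e.
under eq_bigr do rewrite exchange_big /=.
rewrite exchange_big /=; apply: eq_bigr => k _.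
under eq_bigr do rewrite exchange_big /=.
rewrite exchange_big /=; apply: eq_bigr => l _.
rewrite mulr_sumr; apply: eq_bigr => i _; by rewrite mulr_sumr.
Qed.

Section Core.
Variable K : finType.
Variables (S : op C T) (u : K -> T -> C) (p : K -> C).
Hypothesis horth : forall k l, \sum_t (u k t)^* * u l t = (k == l)%:R.
Hypothesis hcompl : forall s t, \sum_k u k s * (u k t)^* = (s == t)%:R.
Hypothesis heig : forall k s, \sum_t S s t * u k t = p k * u k s.

Definition coef (x : T -> C) k := \sum_t (u k t)^* * x t.

Lemma expand x t : x t = \sum_k coef x k * u k t.
Proof.
rewrite /coef.
under eq_bigr do rewrite big_distrl /=.
rewrite exchange_big /=.
have -> : \sum_j \sum_i (u i j)^* * x j * u i t = \sum_j x j * (t == j)%:R.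
  apply: eq_bigr => j _; rewrite -hcompl mulr_sumr; apply: eq_bigr => i _; ring.
by rewrite sum_delta.
Qed.

Lemma QS k l : Qb S (u k) (u l) = p l * (k == l)%:R.
Proof.
rewrite /Qb -horth mulr_sumr; apply: eq_bigr => i _.
under eq_bigr do rewrite -mulrA.
by rewrite -mulr_sumr heig; ring.
Qed.

Lemma QI k l : Qb (@opid C T) (u k) (u l) = (k == l)%:R.
Proof. by rewrite Qb_id horth. Qed.

Lemma S_exp i j : S i j = \sum_k p k * u k i * (u k j)^*.
Proof.
have -> : S i j = \sum_t S i t * (t == j)%:R.
  by rewrite (bigD1 j) //= eqxx mulr1 big1 ?addr0 // => t /negbTE ->; rewrite mulr0.
under eq_bigr do rewrite -hcompl mulr_sumr.
rewrite exchange_big /=; apply: eq_bigr => k _.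
under eq_bigr do rewrite mulrA.
by rewrite -big_distrl /= heig.
Qed.

Lemma tr_formula X : tr (opmul S X) = \sum_k p k * Qb X (u k) (u k).
Proof.
rewrite /tr /opmul /Qb.
under eq_bigr do under eq_bigr do rewrite S_exp big_distrl /=.
under eq_bigr do rewrite exchange_big /=.
rewrite exchange_big /=; apply: eq_bigr => k _.
rewrite mulr_sumr exchange_big /=; apply: eq_bigr => j _.
rewrite mulr_sumr; apply: eq_bigr => i _; ring.
Qed.


Lemma core_psd (P : op C T) (alpha : C) :
  psd S -> tr S = 1 -> (forall k, p k <= alpha) ->
  psd P -> psd (opsub (@opid C T) P) -> tr (opmul S P) = 1 ->
  psd (opsub (opscale alpha P) S) /\ 0 < alpha.
Proof.
move=> hS trS hal hP hIP trSP.
set A := opsub (@opid C T) P.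
have p_ge0 : forall k, 0 <= p k.
  move=> k; have := hS (u k); rewrite -/(Qb _ _ _) QS eqxx mulr1 //.
have trI : tr (opmul S (@opid C T)) = 1.
  rewrite -trS /tr /opmul; apply: eq_bigr => i _.
  rewrite (bigD1 i) //= /opid eqxx mulr1 big1 ?addr0 // => j hj.
  by rewrite (negbTE hj) mulr0.
have sump : \sum_k p k = 1.
  by rewrite -trI tr_formula; apply: eq_bigr => k _; rewrite QI eqxx mulr1.
have alpha_gt0 : 0 < alpha.
  have [k hk] : exists k, p k != 0.
    apply/existsP; apply: contraT; rewrite negb_exists => /forallP h.
    move: sump; rewrite big1 => [/eqP|k _]; first by rewrite eq_sym oner_eq0.
    by apply/eqP; have := h k; rewrite negbK.
  by apply: (lt_le_trans _ (hal k)); rewrite lt_def hk p_ge0.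
split => //.
have trA : \sum_k p k * Qb A (u k) (u k) = 0.
  rewrite /A; under eq_bigr do rewrite Qb_sub mulrBr.
  rewrite sumrB -!tr_formula trI trSP; exact: subrr.
have kerA : forall k, p k != 0 -> Qb A (u k) (u k) = 0.
  move=> k hk.
  have h0 : forall i, predT i -> 0 <= p i * Qb A (u i) (u i).
    by move=> i _; rewrite mulr_ge0 // hIP.
  have h1 := @psumr_eq0P _ _ predT (fun k => p k * Qb A (u k) (u k)) h0 trA k isT.
  move: h1 => /eqP h1; move: h1; rewrite mulf_eq0 (negbTE hk) /=; by move/eqP.
move=> v.
rewrite -/(Qb _ _ _) Qb_sub Qb_scale.
set a := coef v.
pose b k := if p k == 0 then a k else 0.
pose w := fun t => \sum_k b k * u k t.
have hv : v =1 (fun t => \sum_k a k * u k t) by move=> t; rewrite expand.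
have QPv : Qb P v v = Qb (@opid C T) v v - Qb A v v.
  by rewrite /A Qb_sub opprB addrC subrK.
have QAvw : Qb A v v = Qb A w w.
  rewrite (@Qb_ext A v _ v _ hv hv) Qb_lin Qb_lin.
  apply: eq_bigr => k _; apply: eq_bigr => l _.
  rewrite /b; case: (eqVneq (p k) 0) => hk.
    case: (eqVneq (p l) 0) => hl //.
    by rewrite (psd_kernel_l _ _ _ hIP (kerA _ hl)) ?mulr0.
  by rewrite (psd_kernel _ _ _ hIP (kerA _ hk)) ?mulr0.
have QAw : Qb A w w <= Qb (@opid C T) w w.
  by rewrite -subr_ge0 /A Qb_sub opprB addrC subrK; exact: hP.
have QIexp : forall c : K -> C, Qb (@opid C T) (fun t => \sum_k c k * u k t)
     (fun t => \sum_k c k * u k t) = \sum_k (c k)^* * c k.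
  move=> c; rewrite Qb_lin; apply: eq_bigr => k _.
  under eq_bigr do rewrite QI.
  by rewrite (@sum_delta _ (fun l => (c k)^* * c l)).
have QSv : Qb S v v = \sum_k p k * ((a k)^* * a k).
  rewrite (@Qb_ext S v _ v _ hv hv) Qb_lin; apply: eq_bigr => k _.
  under eq_bigr do rewrite QS mulrA.
  by rewrite (@sum_delta _ (fun l => (a k)^* * a l * p l)) mulrC.
have QIv : Qb (@opid C T) v v = \sum_k (a k)^* * a k.
  by rewrite (@Qb_ext _ v _ v _ hv hv) QIexp.
have QIw : Qb (@opid C T) w w = \sum_k (b k)^* * b k by rewrite QIexp.
rewrite QPv QAvw.
apply: (@le_trans _ _ (alpha * (Qb (@opid C T) v v - Qb (@opid C T) w w) - Qb S v v)).
  rewrite QIv QIw QSv -sumrB mulr_sumr -sumrB; apply: sumr_ge0 => k _.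
  rewrite /b; case: (eqVneq (p k) 0) => hk.
    by rewrite hk subrr mulr0 mul0r subrr.
  rewrite rmorph0 mulr0 subr0 -mulrBl; apply: mulr_ge0.
    by rewrite subr_ge0.
  by rewrite mulrC mul_conjC_ge0.
rewrite lerD2r; apply: ler_wpM2l; first exact: ltW.
by rewrite lerD2l lerN2.
Qed.
End Core.
End Q.

Local Close Scope sesquilinear_scope.

Set Implicit Arguments.
Section Main.
Context {C : numClosedFieldType}.

Lemma tr_opmul_scale (T : finType) (X Y : op C T) c :
  tr (opmul X (opscale c Y)) = c * tr (opmul X Y).
Proof.
rewrite /tr /opmul /opscale mulr_sumr; apply: eq_bigr => i _.
rewrite mulr_sumr; apply: eq_bigr => j _; ring.
Qed.

Lemma tr_scale (T : finType) (X : op C T) c : tr (opscale c X) = c * tr X.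
Proof. by rewrite /tr /opscale mulr_sumr. Qed.

Lemma tr_sub (T : finType) (X Y : op C T) : tr (opsub X Y) = tr X - tr Y.
Proof. by rewrite /tr /opsub sumrB. Qed.

Lemma tr_psd_ge0 (T : finType) (X : op C T) : psd X -> 0 <= tr X.
Proof.
move=> hX; rewrite /tr; apply: sumr_ge0 => i _.
by rewrite -(Qb_ev C T X i i); apply: hX.
Qed.

Lemma psd_tr0 (T : finType) (X : op C T) : psd X -> tr X = 0 -> forall i j, X i j = 0.
Proof.
move=> hX h0 i j.
have hd : forall i, X i i = 0.
  move=> k.
  have h1 : forall l, predT l -> 0 <= X l l.
    by move=> l _; rewrite -(Qb_ev C T X l l); apply: hX.
  exact: (@psumr_eq0P _ _ predT (fun l => X l l) h1 h0 k isT).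
rewrite -(Qb_ev C T X i j); apply: psd_kernel => //.
by rewrite Qb_ev hd.
Qed.

Lemma sep_scale m (d : 'I_m -> nat) (Pi W : op C (msys d)) (l : C) :
  separable Pi -> 0 <= l -> (forall x y, W x y = l * Pi x y) -> separable W.
Proof.
move=> [n [c [P [hc [hP hPi]]]]] hl hW.
exists n, (fun i => l * c i), P; split; [|split] => //.
  by move=> i; rewrite mulr_ge0.
move=> x y; rewrite hW hPi mulr_sumr; apply: eq_bigr => i _; ring.
Qed.

Lemma psd_scale_ext (T : finType) (Pi W : op C T) (l : C) :
  psd Pi -> 0 <= l -> (forall x y, W x y = l * Pi x y) -> psd W.
Proof.
move=> hP hl hW v.
have -> : \sum_i \sum_j (v i)^* * W i j * v j = l * Qb C T Pi v v.
  rewrite -(Qb_scale C T Pi l); apply: eq_bigr => i _; apply: eq_bigr => j _.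
  by rewrite hW.
by rewrite mulr_ge0 //; apply: hP.
Qed.

End Main.

Unset Implicit Arguments.

Theorem mainTheorem9 (C : numClosedFieldType) (m : nat) (d : 'I_m -> nat)
  (sigma : op C (msys d)) (alpha r : C) :
  density sigma ->
  largest_eigenvalue sigma alpha ->
  is_global_robustness sigma r ->
  forall Pi : op C (msys d), d_feasible sigma Pi ->
    alpha^-1 * (1 + r) <= tr Pi / tr (opmul sigma Pi).
Proof.
move=> [hS trS] [_ hmax] [_ rmin] Pi [sepPi [psdPi [s_gt0 [psdP hIP]]]].
set s := tr (opmul sigma Pi) in s_gt0 psdP hIP *.
set P := opscale s^-1 Pi in psdP hIP.
have [u [p [horth [hcompl heig]]]] := spectral_basis C (msys d) sigma hS.
have hal : forall k, p k <= alpha.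
  move=> k; apply: hmax; exists (u k); split; last by move=> i; rewrite heig.
  apply/existsP; apply: contraT; rewrite negb_exists => /forallP h.
  have := horth k k; rewrite eqxx big1 => [/eqP|t _]; first by rewrite eq_sym oner_eq0.
  by have := h t; rewrite negbK => /eqP ->; rewrite mulr0.
have trSP : tr (opmul sigma P) = 1.
  by rewrite /P tr_opmul_scale -/s mulVf // lt0r_neq0.
have [hB alpha_gt0] := core_psd C _ _ sigma u p horth hcompl heig P alpha
   hS trS hal psdP hIP trSP.
set B := opsub (opscale alpha P) sigma in hB.
set t := tr B.
have t_ge0 : 0 <= t by apply: tr_psd_ge0.
have trP : tr P = s^-1 * tr Pi by rewrite /P tr_scale.
have ht : 1 + t = alpha * (s^-1 * tr Pi).
  by rewrite /t /B tr_sub tr_scale trS trP; ring.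
have t1_gt0 : 0 < 1 + t by rewrite ltr_pwDl.
pose l := alpha * s^-1 / (1 + t).
have l_ge0 : 0 <= l.
  by rewrite /l !mulr_ge0 // ?invr_ge0 ?ltW.
pose rho := fun x y => if t == 0 then sigma x y else t^-1 * B x y.
have tB : forall x y, t * rho x y = B x y.
  move=> x y; rewrite /rho; case: eqVneq => h.
    by rewrite h mul0r (psd_tr0 hB h).
  by rewrite mulrA mulfV // mul1r.
have hW : forall x y, (sigma x y + t * rho x y) / (1 + t) = l * Pi x y.
  move=> x y; rewrite tB /B /opsub /opscale /P /opscale /l; ring.
have feas : Rg_feasible sigma t.
  split => //; exists rho; split.
    rewrite /rho; case: eqVneq => h; first by split.
    split.
      apply: (@psd_scale_ext _ _ B _ t^-1 hB); first by rewrite invr_ge0.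
      by [].
    by rewrite /tr -mulr_sumr -/(tr B) -/t mulVf.
  split.
    split; first exact: (@psd_scale_ext _ _ Pi _ l psdPi l_ge0 hW).
    rewrite /tr; under eq_bigr do rewrite hW.
    rewrite -mulr_sumr -/(tr Pi) /l -mulrA (mulrC _ (tr Pi)) mulrA.
    have -> : alpha / s * tr Pi = 1 + t by rewrite ht mulrA.
    by rewrite mulfV // lt0r_neq0.
  exact: (@sep_scale _ _ _ Pi _ l sepPi l_ge0 hW).
have rt := rmin t feas.
have -> : tr Pi / tr (opmul sigma Pi) = alpha^-1 * (1 + t).
  by rewrite ht mulrA mulVf ?lt0r_neq0 // mul1r mulrC.
by apply: ler_wpM2l; [rewrite invr_ge0 ltW | rewrite lerD2l].
Qed.
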